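(* Let $Z$ be a smooth $l$-dimensional toric variety whose fan contains two $l$-dimensional cones $\sigma_+=\mathrm{cone}(v_1,\dots,v_{l-1},v_+)$ and $\sigma_-=\mathrm{cone}(v_1,\dots,v_{l-1},v_-)$ (with $v_1,\dots,v_{l-1},v_\pm$ primitive) such that $\sigma_+\cap\sigma_-$ has dimension $l-1$ and $\sigma_+\cup\sigma_-$ is strictly convex. Assume moreover that the piecewise linear function $k$ associated to the anticanonical bundle of $Z$ is not strictly convex on $\sigma_+\cup\sigma_-$, i.e. $k_{\sigma_+}(v_-)\ge 1$, where $k_{\sigma_+}$ is the linear function coinciding with $k$ on $\sigma_+$. Then the anticanonical bundle of any toric variety obtained from $Z$ by a sequence of blow-ups centred in torus-fixed points is not ample.
   Context: Toric varieties are for a torus $S$ with cocharacter lattice $\chi_*(S)$; the fan lives in $\chi_*(S)_{\mathbb{R}}$. The piecewise linear function $k$ associated to the anticanonical bundle is the function on the support of the fan, linear on each cone, with $k(v)=1$ for every primitive ray generator $v$; the anticanonical bundle is ample iff for each maximal cone $C$ and each primitive ray generator $v\notin C$ one has $k_C(v)<1$. A blow-up at a torus-fixed point corresponds to star subdivision of a maximal cone at the sum of its generators. *)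

(* Defs.v *)
(* Smooth fans in the lattice Z^l (cocharacter lattice),
   cones are described by their (primitive) ray generators. *)
From HB Require Import structures.
From mathcomp Require Import all_boot all_order all_algebra.
Set Implicit Arguments. Unset Strict Implicit. Unset Printing Implicit Defensive.
Import Order.TTheory GRing.Theory Num.Theory.
Local Open Scope ring_scope.

Notation lvec l := 'rV[int]_l.

Definition toQ l (v : lvec l) : 'rV[rat]_l := map_mx (fun z : int => z%:~R) v.

Definition cone_of l (S : seq (lvec l)) (x : 'rV[rat]_l) : Prop :=
  exists a : lvec l -> rat, (forall v, 0 <= a v) /\
    x = \sum_(v <- S) a v *: toQ v.

Definition smooth_cone l (S : seq (lvec l)) : Prop :=
  uniq S /\ exists B : 'M[int]_l, B \in unitmx /\
    forall v, v \in S -> exists i, row i B = v.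

(* A smooth fan: a finite list of smooth cones (the fan consists of these
   cones and their faces) such that any two of them meet in a common face. *)
Definition smooth_fan l (F : seq (seq (lvec l))) : Prop :=
  (forall S, S \in F -> smooth_cone S) /\
  (forall S T, S \in F -> T \in F -> forall x,
      (cone_of S x /\ cone_of T x) <-> cone_of [seq v <- S | v \in T] x).

Definition in_fan l (F : seq (seq (lvec l))) (C : seq (lvec l)) : bool :=
  has (perm_eq C) F.

Definition rays l (F : seq (seq (lvec l))) : seq (lvec l) := undup (flatten F).

Definition maximal_cone l (F : seq (seq (lvec l))) (C : seq (lvec l)) : bool :=
  (C \in F) && ~~ has (fun T => all (mem T) C && ~~ all (mem C) T) F.

Definition lin l (m : 'rV[rat]_l) (v : lvec l) : rat :=
  \sum_(i < l) m 0 i * (v 0 i)%:~R.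

(* ampleness of the anticanonical bundle: for every maximal cone C the
   linear function k_C (agreeing with k on C, i.e. equal to 1 on the
   generators of C) satisfies k_C(v) < 1 for every ray generator v not in C *)
Definition anticanonical_ample l (F : seq (seq (lvec l))) : Prop :=
  forall C, maximal_cone F C ->
    exists m : 'rV[rat]_l, (forall v, v \in C -> lin m v = 1) /\
      (forall v, v \in rays F -> v \notin C -> lin m v < 1).

(* blow-up in the torus-fixed point of the l-dimensional cone C :
   star subdivision of C at the sum u of its generators *)
Definition star_sub l (F : seq (seq (lvec l))) (C : seq (lvec l)) :=
  let u := \sum_(w <- C) w in
  [seq T <- F | ~~ perm_eq T C] ++ [seq u :: rem w C | w <- C].

Inductive blowups l (F : seq (seq (lvec l))) : seq (seq (lvec l)) -> Prop :=
| blowups_refl : blowups F F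
| blowups_step G C : blowups F G -> in_fan G C -> size C = l ->
    blowups F (star_sub G C).

(* Main.v *)
Require Import Defs.
From mathcomp Require Import all_boot all_order all_algebra ring lra.
Set Implicit Arguments. Unset Strict Implicit. Unset Printing Implicit Defensive.
Import Order.TTheory GRing.Theory Num.Theory.
Local Open Scope ring_scope.

Section L.
Variable l : nat.
Implicit Types (v w : lvec l) (x y : 'rV[rat]_l) (m n : 'rV[rat]_l).

Definition linQ m x : rat := \sum_(i < l) m 0 i * x 0 i.

Lemma linE m v : lin m v = linQ m (toQ v).
Proof. by apply: eq_bigr => i _; rewrite mxE. Qed.

Lemma linQD m x y : linQ m (x + y) = linQ m x + linQ m y.
Proof. by rewrite /linQ -big_split; apply: eq_bigr => i _; rewrite mxE mulrDr. Qed.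

Lemma linQZ m c x : linQ m (c *: x) = c * linQ m x.
Proof. rewrite /linQ mulr_sumr; apply: eq_bigr => i _; rewrite mxE; ring. Qed.

Lemma linQ0 m : linQ m 0 = 0.
Proof. by rewrite /linQ big1 // => i _; rewrite mxE mulr0. Qed.

Lemma linQ_sum (T : Type) m (s : seq T) (f : T -> 'rV[rat]_l) :
  linQ m (\sum_(t <- s) f t) = \sum_(t <- s) linQ m (f t).
Proof.
elim: s => [|t s IH]; first by rewrite !big_nil linQ0.
by rewrite !big_cons linQD IH.
Qed.

Lemma linQB_m m1 m2 x : linQ (m1 - m2) x = linQ m1 x - linQ m2 x.
Proof. by rewrite /linQ -sumrB; apply: eq_bigr => i _; rewrite !mxE mulrBl. Qed.

Lemma toQD v w : toQ (v + w) = toQ v + toQ w.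
Proof. by apply/matrixP => i j; rewrite !mxE intrD. Qed.

Lemma toQ0 : toQ (0 : lvec l) = 0.
Proof. by apply/matrixP => i j; rewrite !mxE. Qed.

Lemma toQZ (c : int) v : toQ (c *: v) = c%:~R *: toQ v.
Proof. by apply/matrixP => i j; rewrite !mxE intrM. Qed.

Lemma toQ_sum (s : seq (lvec l)) :
  toQ (\sum_(v <- s) v) = \sum_(v <- s) toQ v.
Proof.
elim: s => [|t s IH]; first by rewrite !big_nil toQ0.
by rewrite !big_cons toQD IH.
Qed.

Lemma lin_sum m (s : seq (lvec l)) :
  lin m (\sum_(v <- s) v) = \sum_(v <- s) lin m v.
Proof.
rewrite linE toQ_sum linQ_sum; apply: eq_bigr => v _; by rewrite linE.
Qed.

Lemma linB_m m1 m2 v : lin (m1 - m2) v = lin m1 v - lin m2 v.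
Proof. by rewrite !linE linQB_m. Qed.

Definition hasdual (S : seq (lvec l)) :=
  forall w, w \in S -> exists n, lin n w = 1 /\
    forall w', w' \in S -> w' != w -> lin n w' = 0.

Lemma smooth_dual S : smooth_cone S -> hasdual S.
Proof.
move=> [uS [B [uB HB]]] w wS.
have [i Hi] := HB w wS.
exists (\row_j ((invmx B) j i)%:~R); split.
  move=> {wS}; rewrite -Hi /lin.
  have := mulmxV uB; move/matrixP/(_ i i); rewrite mxE !mxE eqxx /= => H.
  apply: (@eq_trans _ _ ((\sum_(j<l) B i j * invmx B j i)%:~R)); last by rewrite H.
  rewrite rmorph_sum /=.
  by apply: eq_bigr => j _; rewrite !mxE intrM mulrC.
move=> w' w'S nw.
have [k Hk] := HB w' w'S.
have nki : k != i by apply: contraNneq nw => eki; rewrite -Hk -Hi eki.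
have := mulmxV uB; move/matrixP/(_ k i); rewrite mxE !mxE (negbTE nki) => H.
rewrite -Hk /lin.
apply: (@eq_trans _ _ ((\sum_(j<l) B k j * invmx B j i)%:~R)); last by rewrite H.
rewrite rmorph_sum /=.
by apply: eq_bigr => j _; rewrite !mxE intrM mulrC.
Qed.

Lemma smooth_size (S : seq (lvec l)) : smooth_cone S -> (size S <= l)%N.
Proof.
move=> [uS [B [uB HB]]].
apply: (@leq_trans (size (map (fun i => row i B) (enum 'I_l)))); last by rewrite size_map size_enum_ord.
apply: uniq_leq_size => // v /HB [i <-]; apply: map_f; by rewrite mem_enum.
Qed.


Lemma smooth_span (S : seq (lvec l)) : smooth_cone S -> size S = l ->
  forall y : lvec l, exists c : lvec l -> int, y = \sum_(v <- S) c v *: v.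
Proof.
move=> [uS [B [uB HB]]] szS y.
pose g i := row i B.
have ginj : injective g.
  move=> i j /(congr1 (fun r => r *m invmx B)); rewrite /g -!row_mul mulmxV //.
  rewrite !row1 => /matrixP/(_ 0 i); rewrite !mxE !eqxx /=.
  by case: (eqVneq i j) => // _ /eqP; rewrite oner_eq0.
have sub : {subset S <= map g (enum 'I_l)}.
  by move=> v /HB [i <-]; apply: map_f; rewrite mem_enum.
have hsz : (size (map g (enum 'I_l)) <= size S)%N by rewrite size_map size_enum_ord szS.
have [_ eqS] := uniq_min_size uS sub hsz.
have ug : uniq (map g (enum 'I_l)) by rewrite map_inj_uniq // enum_uniq.
have pS : perm_eq (map g (enum 'I_l)) S by apply: uniq_perm => // v; rewrite eqS.
pose coef := y *m invmx B.
exists (fun v => if [pick i | g i == v] is Some i then coef 0 i else 0).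
rewrite -(perm_big _ pS) big_map /= big_enum /=.
have -> : y = coef *m B by rewrite /coef mulmxKV.
rewrite mulmx_sum_row; apply: eq_bigr => i _.
case: pickP => [j /eqP /ginj -> //|/(_ i)]; by rewrite eqxx.
Qed.


Lemma dual_sum (C : seq (lvec l)) w n : uniq C -> w \in C -> lin n w = 1 ->
  (forall w', w' \in C -> w' != w -> lin n w' = 0) ->
  lin n (\sum_(v <- C) v) = 1.
Proof.
move=> uC wC h1 h0; rewrite lin_sum (bigD1_seq w) //= h1 big_seq_cond big1 ?addr0 //.
by move=> v /andP [vC nv]; apply: h0.
Qed.

Definition ginv (G : seq (seq (lvec l))) :=
  forall T, T \in G -> [/\ uniq T, (size T <= l)%N & hasdual T].

Lemma ginv_F F : smooth_fan F -> ginv F.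
Proof.
move=> [HF _] T /HF sT; split; [by case: sT | exact: smooth_size | exact: smooth_dual].
Qed.

Lemma in_fanP G (C : seq (lvec l)) : in_fan G C -> exists2 T, T \in G & perm_eq C T.
Proof. by move/hasP => [T TG pT]; exists T. Qed.

Lemma ginv_step G C : ginv G -> in_fan G C -> size C = l -> ginv (star_sub G C).
Proof.
move=> HG /in_fanP [T0 T0G pC] szC.
have [uT0 _ dT0] := HG T0 T0G.
have uC : uniq C by rewrite (perm_uniq pC).
have dC : hasdual C.
  move=> w; rewrite (perm_mem pC) => /dT0 [n [h1 h0]]; exists n; split => // w'.
  by rewrite (perm_mem pC); apply: h0.
move=> T; rewrite mem_cat => /orP [|].
  by rewrite mem_filter => /andP [_ /HG].
move/mapP => [w wC ->].
set u := \sum_(v <- C) v.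
have memr : forall c, c \in rem w C = (c != w) && (c \in C).
  by move=> c; rewrite (mem_rem_uniq _ uC).
have [nw [nw1 nw0]] := dC w wC.
have nwu : lin nw u = 1 by apply: (dual_sum uC wC).
have urem : u \notin rem w C.
  apply/negP; rewrite memr => /andP [uw uC']; have := nw0 _ uC' uw.
  by rewrite nwu => /eqP; rewrite oner_eq0.
split.
- by rewrite /= urem rem_uniq.
- by rewrite /= size_rem // szC prednK // -szC; case: (C) wC.
move=> w0; rewrite in_cons => /orP [/eqP -> | w0r].
  exists nw; split => // w'; rewrite in_cons => /orP [/eqP -> |]; first by rewrite eqxx.
  by rewrite memr => /andP [w'w w'C] _; apply: nw0.
move: (w0r); rewrite memr => /andP [w0w w0C].
have [nc [nc1 nc0]] := dC w0 w0C.
have ncu : lin nc u = 1 by apply: (dual_sum uC w0C).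
exists (nc - nw); split.
  by rewrite linB_m nc1 nw0 // subr0.
move=> w'; rewrite in_cons => /orP [/eqP -> _| ].
  by rewrite linB_m ncu nwu subrr.
rewrite memr => /andP [w'w w'C] w'c.
by rewrite linB_m nc0 // nw0 // subrr.
Qed.

Lemma ginv_blowups F G : smooth_fan F -> blowups F G -> ginv G.
Proof.
move=> sF; elim => [|G' C _ IH inC szC]; first exact: ginv_F.
exact: ginv_step.
Qed.


Lemma sum_const_lin m c (vs : seq (lvec l)) : (forall v, v \in vs -> lin m v = c) ->
  \sum_(v <- vs) lin m v = c * (size vs)%:R.
Proof.
elim: vs => [|v vs IH] H; first by rewrite big_nil mulr0.
rewrite big_cons IH => [|w wv]; last by apply: H; rewrite in_cons wv orbT.
rewrite H ?mem_head //= -[(size vs).+1]addn1 natrD; ring.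
Qed.

Lemma side F (vs : seq (lvec l)) vx G : blowups F G -> in_fan F (rcons vs vx) ->
  exists a, exists s p : rat, [/\ in_fan G (rcons vs a), 0 <= s, 1 <= p &
    forall m c, (forall v, v \in vs -> lin m v = c) -> lin m a = c * s + p * lin m vx].
Proof.
move=> bG inF; elim: bG => [|G' C _ [a [s [p [inG s0 p1 Ha]]]] inC szC].
  by exists vx, 0, 1; split => // m c _; rewrite mulr0 mul1r add0r.
have [T TG pT] := in_fanP inG.
case pTC: (perm_eq T C).
  have pC : perm_eq (rcons vs a) C by apply: perm_trans pT pTC.
  have aC : a \in C by rewrite -(perm_mem pC) mem_rcons mem_head.
  exists (\sum_(v <- C) v), (s + (size vs)%:R), p; split.
  - apply/hasP; exists ((\sum_(v <- C) v) :: rem a C).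
      by rewrite mem_cat; apply/orP; right; apply: map_f.
    rewrite perm_rcons perm_cons.
    have := perm_trans pC (perm_to_rem aC); rewrite perm_rcons perm_cons //.
  - by rewrite addr_ge0 // ler0n.
  - by [].
  move=> m c Hm.
  rewrite lin_sum -(perm_big _ pC) /= big_rcons /= (Ha m c Hm) (sum_const_lin Hm); ring.
apply: (@ex_intro _ _ a); exists s, p; split => //.
apply/hasP; exists T => //; by rewrite mem_cat mem_filter pTC TG.
Qed.


Lemma toQ_sumf (T : Type) (s : seq T) (f : T -> lvec l) :
  toQ (\sum_(t <- s) f t) = \sum_(t <- s) toQ (f t).
Proof.
elim: s => [|t s IH]; first by rewrite !big_nil toQ0.
by rewrite !big_cons toQD IH.
Qed.

Lemma cone_perm (S1 S2 : seq (lvec l)) x : perm_eq S1 S2 -> cone_of S1 x -> cone_of S2 x.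
Proof. by move=> p [a [a0 ->]]; exists a; split => //; rewrite (perm_big _ p). Qed.

Lemma lin_addm m1 m2 v : lin (m1 + m2) v = lin m1 v + lin m2 v.
Proof. by rewrite /lin -big_split; apply: eq_bigr => i _; rewrite mxE mulrDl. Qed.

Lemma lin_scalem k m v : lin (k *: m) v = k * lin m v.
Proof. rewrite /lin mulr_sumr; apply: eq_bigr => i _; rewrite mxE; ring. Qed.

Lemma sign_vm F (vs : seq (lvec l)) vp vm n :
  smooth_fan F -> (0 < l)%N -> size vs = l.-1 ->
  in_fan F (rcons vs vp) -> in_fan F (rcons vs vm) ->
  smooth_cone (rcons vs vp) -> smooth_cone (rcons vs vm) -> vp != vm ->
  (forall v, v \in vs -> lin n v = 0) -> lin n vp = 1 -> lin n vm <= 0.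
Proof.
move=> [_ fanP] l0 szvs inP inM smP smM npm n0 n1.
have : uniq (rcons vs vp) by case: smP.
rewrite rcons_uniq => /andP [vpvs _].
have : uniq (rcons vs vm) by case: smM.
rewrite rcons_uniq => /andP [vmvs _].
rewrite leNgt; apply/negP => pos.
have szP : size (rcons vs vp) = l by rewrite size_rcons szvs prednK.
have [c Hc] := smooth_span smP szP vm.
have HcQ : toQ vm = \sum_(v <- rcons vs vp) (c v)%:~R *: toQ v.
  by rewrite {1}Hc toQ_sumf; apply: eq_bigr => v _; rewrite toQZ.
have cvp : (c vp)%:~R = lin n vm.
  rewrite linE HcQ linQ_sum big_rcons /= linQZ -linE n1 mulr1 big_seq big1 ?add0r //.
  by move=> v vvs; rewrite linQZ -linE n0 // mulr0.
pose d v : rat := `|(c v)%:~R|.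
pose x := toQ vm + \sum_(v <- vs) d v *: toQ v.
have [S SF pS] := in_fanP inP.
have [T TF pT] := in_fanP inM.
have xM : cone_of (rcons vs vm) x.
  exists (fun v => if v == vm then 1 else d v); split.
    by move=> v; case: ifP => _ //; rewrite normr_ge0.
  rewrite big_rcons /= eqxx scale1r addrC /x; congr (_ + _).
  rewrite !big_seq; apply: eq_bigr => v vvs.
  by case: eqP => // evm; rewrite -evm vvs in vmvs.
have xP : cone_of (rcons vs vp) x.
  exists (fun v => if v == vp then (c vp)%:~R else (c v)%:~R + d v); split.
    move=> v; case: ifP => _; first by rewrite cvp ltW.
    by have := ler_norm (- ((c v)%:~R : rat)); rewrite normrN /d; lra.
  rewrite big_rcons /= eqxx /x HcQ big_rcons /=.
  rewrite -(addrA _ _ (\sum_(v <- vs) d v *: toQ v)) (addrC (_ *: toQ vp)) addrA.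
  rewrite -big_split /=; congr (_ + _).
  rewrite !big_seq; apply: eq_bigr => v vvs.
  case: eqP => [evp|_]; first by rewrite -evp vvs in vpvs.
  by rewrite scalerDl.
have := proj1 (fanP S T SF TF x) (conj (cone_perm pS xP) (cone_perm pT xM)).
move=> [a [a0 Hx]].
have : linQ n x = 0.
  rewrite Hx linQ_sum big_seq big1 // => v; rewrite mem_filter => /andP [vT vS].
  rewrite -(perm_mem pT) mem_rcons in_cons in vT.
  rewrite -(perm_mem pS) mem_rcons in_cons in vS.
  rewrite linQZ -linE.
  case/orP: vS => [/eqP evp|vvs]; last by rewrite n0 // mulr0.
  case/orP: vT => [/eqP evm|vvs]; first by move: npm; rewrite -evp evm eqxx.
  by move: vpvs; rewrite -evp vvs.
rewrite /x linQD linQ_sum big_seq big1 ?addr0 -?linE.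
  by move=> h; move: pos; rewrite h ltxx.
by move=> v vvs; rewrite linQZ -linE n0 // mulr0.
Qed.

End L.
Unset Implicit Arguments.


Theorem lemma3p1 (l : nat) (F : seq (seq 'rV[int]_l))
  (vs : seq 'rV[int]_l) (vp vm : 'rV[int]_l) :
  smooth_fan F ->
  size vs = l.-1 ->
  in_fan F (rcons vs vp) ->
  in_fan F (rcons vs vm) ->
  smooth_cone (rcons vs vp) -> smooth_cone (rcons vs vm) ->
  (0 < l)%N ->
  vp != vm ->
  (* sigma_+ cup sigma_- is convex *)
  (forall x y : 'rV[rat]_l,
      (cone_of (rcons vs vp) x \/ cone_of (rcons vs vm) x) ->
      (cone_of (rcons vs vp) y \/ cone_of (rcons vs vm) y) ->
      (cone_of (rcons vs vp) (x + y) \/ cone_of (rcons vs vm) (x + y))) ->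
  (* ... and strictly convex (contains no line) *)
  (forall x : 'rV[rat]_l,
      (cone_of (rcons vs vp) x \/ cone_of (rcons vs vm) x) ->
      (cone_of (rcons vs vp) (- x) \/ cone_of (rcons vs vm) (- x)) ->
      x = 0) ->
  (* k is not strictly convex on sigma_+ cup sigma_- : k_{sigma_+}(v_-) >= 1 *)
  (forall m : 'rV[rat]_l, (forall v, v \in rcons vs vp -> lin m v = 1) ->
      1 <= lin m vm) ->
  forall G, blowups F G -> ~ anticanonical_ample G.
Proof.
Proof.
move=> sF szvs inP inM smP smM l0 npm _ _ Hk G bG ample.
have : uniq (rcons vs vp) by case: smP.
rewrite rcons_uniq => /andP [vpvs _].
have : uniq (rcons vs vm) by case: smM.
rewrite rcons_uniq => /andP [vmvs _].
have vpin : vp \in rcons vs vp by rewrite mem_rcons mem_head.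
have vmin : vm \in rcons vs vm by rewrite mem_rcons mem_head.
have [n [n1 n0']] := smooth_dual smP vpin.
have n0 : forall v, v \in vs -> lin n v = 0.
  move=> v vvs; apply: n0'; first by rewrite mem_rcons in_cons vvs orbT.
  by apply: contraNneq vpvs => <-.
have [n' [n'1 n'0']] := smooth_dual smM vmin.
have n'0 : forall v, v \in vs -> lin n' v = 0.
  move=> v vvs; apply: n'0'; first by rewrite mem_rcons in_cons vvs orbT.
  by apply: contraNneq vmvs => <-.
have nvm : lin n vm <= 0 by apply: (sign_vm sF l0 szvs inP inM smP smM npm n0 n1).
have gG := ginv_blowups sF bG.
have [a [s [p [inGa s0 p1 Ha]]]] := side bG inP.
have [b [s' [q [inGb s'0 q1 Hb]]]] := side bG inM.
have [T TG pT] := in_fanP inGa.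
have [uT szT _] := gG T TG.
have szT' : size T = l by rewrite -(perm_size pT) size_rcons szvs prednK.
have mT : maximal_cone G T.
  rewrite /maximal_cone TG /=; apply/hasPn => T' T'G; apply/negP => /andP [sub nsub].
  have [uT' szT'' _] := gG T' T'G.
  have hs : (size T' <= size T)%N by rewrite szT'.
  have [_ eqT] := uniq_min_size uT (fun x xT => (allP sub) x xT) hs.
  by move/negP: nsub; apply; apply/allP => x xT; rewrite inE (eqT x).
have [m [m1 m2]] := ample T mT.
have memT : forall v, (v \in T) = (v \in rcons vs a) by move=> v; rewrite (perm_mem pT).
have m1' : forall v, v \in vs -> lin m v = 1.
  by move=> v vvs; apply: m1; rewrite memT mem_rcons in_cons vvs orbT.
have ma : lin m a = 1 by apply: m1; rewrite memT mem_rcons mem_head.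
have [Tb TbG pTb] := in_fanP inGb.
have bray : b \in rays G.
  rewrite /rays mem_undup; apply/flattenP; exists Tb => //.
  by rewrite -(perm_mem pTb) mem_rcons mem_head.
have nb : lin n' b = q by rewrite (Hb n' 0 n'0) n'1; ring.
have bT : b \notin T.
  rewrite memT mem_rcons in_cons; apply/negP => /orP [/eqP eba | bvs].
    have := Hb n 0 n0; have := Ha n 0 n0; rewrite n1 -eba => ->; nra.
  by move: nb; rewrite n'0 // => q0; move: q1; rewrite -q0; rewrite ler10.
have mb := m2 b bray bT.
have mvp : lin m vp <= 1 by have := Ha m 1 m1'; rewrite ma; nra.
pose m' := m + (1 - lin m vp) *: n.
have Hm' : forall v, v \in rcons vs vp -> lin m' v = 1.
  move=> v; rewrite mem_rcons in_cons => /orP [/eqP -> | vvs].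
    by rewrite lin_addm lin_scalem n1; ring.
  by rewrite lin_addm lin_scalem n0 // m1' //; ring.
have := Hk m' Hm'; rewrite lin_addm lin_scalem => hvm.
have mvm : 1 <= lin m vm by nra.
have := Hb m 1 m1'; nra.
Qed.
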